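(* Let $Q=\sum_{i\in I}E_{i,\sigma(i)}\in N_n$ be a subpermutation and let $A=[a_{ij}]\in QU_n$ be a Belitskii canonical form under $B_n$-similarity. Let $i\in I$ and $j\in[n]$. Then $a_{ij}=0$ (i.e. $(i,j)\notin E_A$) in each of the following situations: (1) $i^+<j$ and $j\in S_h$; (2) $j\notin S_t$ and $i<j^-$. In particular, if $i$ and $j$ lie in the same chain of $G_Q$ and $j\neq i^+$, then $a_{ij}=0$.
   Context: $\mathbb F$ is a field; $[n]=\{1,\dots,n\}$. $B_n$ (resp. $U_n$, $N_n$) is the set of $n\times n$ invertible upper triangular (resp. upper triangular with diagonal entries $1$, strictly upper triangular) matrices over $\mathbb F$; $QU_n=\{QU:U\in U_n\}$; $E_{ij}$ is the matrix unit. A subpermutation is a matrix each of whose rows and columns has at most one nonzero entry, equal to $1$; here $I\subseteq[n]$ and $\sigma:I\to[n]$ is injective with $i<\sigma(i)$. For a matrix $X=[x_{ij}]$, $G_X$ is the directed graph on $[n]$ with arc set $E_X=\{(i,j):x_{ij}\neq0\}$. The connected components of $G_Q$ are directed paths $i_1\to\cdots\to i_p$ with $i_1<\cdots<i_p$, called chains. Notation: $i^+:=\sigma(i)$ for $i\in I$, $j^-:=\sigma^{-1}(j)$ for $j\in\sigma(I)$; $S_h=[n]\setminus I$ (chain heads) and $S_t=[n]\setminus\sigma(I)$ (chain tails). Belitskii order on positions $\{(i,j):1\le i<j\le n\}$: $(i,j)\prec(i',j')$ iff $i>i'$, or $i=i'$ and $j<j'$. Belitskii's algorithm for $B_n$-similarity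 on $N_n$: given $A\in N_n$ put $A^{(0)}=A$, $G^{(0)}=B_n$. For $k=0,1,\dots$, let $(p,q)$ be the $(k+1)$th position in Belitskii order and look at the $(p,q)$ entries of all matrices $G^{(k)}$-similar to $A^{(k)}$: (a) if this entry is always $0$ or can take every value of $\mathbb F$, choose $A^{(k+1)}$ $G^{(k)}$-similar to $A^{(k)}$ with that entry $0$; (b) if it takes exactly the values of $\mathbb F\setminus\{0\}$, choose $A^{(k+1)}$ with that entry $1$; (c) otherwise it is a constant $\lambda\ne0$ and $A^{(k+1)}=A^{(k)}$. $G^{(k+1)}$ is the subgroup of $g\in G^{(k)}$ such that $gA^{(k+1)}g^{-1}$ agrees with $A^{(k+1)}$ in the first $k+1$ positions. The final matrix is the Belitskii canonical form of $A$; a matrix is a Belitskii canonical form if it is the Belitskii canonical form of some matrix. *)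

(* Defs.v *)
From HB Require Import structures.
From mathcomp Require Import all_boot all_order all_algebra.
Set Implicit Arguments. Unset Strict Implicit. Unset Printing Implicit Defensive.
Import GRing.Theory.
Local Open Scope ring_scope.

(* Indices are 0-based: 'I_n stands for [n] = {1,...,n}. *)

Section Defs.
Variables (F : fieldType) (n : nat).

Definition upper_tri (g : 'M[F]_n) : Prop := forall i j : 'I_n, (j < i)%N -> g i j = 0.
Definition in_Bn (g : 'M[F]_n) : Prop := upper_tri g /\ g \in unitmx.
Definition in_Un (U : 'M[F]_n) : Prop := upper_tri U /\ forall i, U i i = 1.
Definition in_Nn (A : 'M[F]_n) : Prop := forall i j : 'I_n, (j <= i)%N -> A i j = 0.

Definition subperm_mx (I : {set 'I_n}) (sigma : 'I_n -> 'I_n) : 'M[F]_n :=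
  \matrix_(i, j) (if (i \in I) && (sigma i == j) then 1 else 0).

Definition in_QUn (Q A : 'M[F]_n) : Prop := exists U, in_Un U /\ A = Q *m U.

Definition conjm (g A : 'M[F]_n) : 'M[F]_n := g *m A *m invmx g.

Definition is_pos (p : 'I_n * 'I_n) : bool := (p.1 < p.2)%N.
Definition bel_lt (p q : 'I_n * 'I_n) : bool :=
  (q.1 < p.1)%N || ((p.1 == q.1) && (p.2 < q.2)%N).
(* number of positions preceding p: p is the (rank p + 1)-th position *)
Definition bel_rank (p : 'I_n * 'I_n) : nat :=
  #|[set q : 'I_n * 'I_n | is_pos q && bel_lt q p]|.
Definition num_pos : nat := #|[set q : 'I_n * 'I_n | is_pos q]|.

Definition agree_upto (k : nat) (X Y : 'M[F]_n) : Prop :=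
  forall p, is_pos p -> (bel_rank p < k)%N -> X p.1 p.2 = Y p.1 p.2.

Fixpoint belG (As : nat -> 'M[F]_n) (k : nat) : 'M[F]_n -> Prop :=
  match k with
  | 0 => in_Bn
  | k'.+1 => fun g => belG As k' g /\ agree_upto k (conjm g (As k)) (As k)
  end.

Definition bel_step (As : nat -> 'M[F]_n) (k : nat) (p : 'I_n * 'I_n) : Prop :=
  let V := fun x : F => exists g, belG As k g /\ conjm g (As k) p.1 p.2 = x in
  (((forall x, V x -> x = 0) \/ (forall x, V x)) /\
     exists g, belG As k g /\ As k.+1 = conjm g (As k) /\ As k.+1 p.1 p.2 = 0)
  \/ ((forall x, V x <-> x != 0) /\
     exists g, belG As k g /\ As k.+1 = conjm g (As k) /\ As k.+1 p.1 p.2 = 1)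
  \/ ((exists l : F, l != 0 /\ forall x, V x <-> x = l) /\ As k.+1 = As k).

Definition bel_cf_of (A0 C : 'M[F]_n) : Prop :=
  exists As : nat -> 'M[F]_n,
    As 0%N = A0 /\
    (forall k p, (k < num_pos)%N -> is_pos p -> bel_rank p = k -> bel_step As k p) /\
    As num_pos = C.

Definition is_bel_cf (C : 'M[F]_n) : Prop := exists A0, in_Nn A0 /\ bel_cf_of A0 C.

Definition Qarc (I : {set 'I_n}) (sigma : 'I_n -> 'I_n) : rel 'I_n :=
  fun x y => (x \in I) && (sigma x == y).
Definition same_chain (I : {set 'I_n}) (sigma : 'I_n -> 'I_n) (x y : 'I_n) : bool :=
  connect (fun a b => Qarc I sigma a b || Qarc I sigma b a) x y.

End Defs.

(* Main.v *)
Require Import Defs.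
From HB Require Import structures.
From mathcomp Require Import all_boot all_order all_algebra.
From mathcomp Require Import zify.
Set Implicit Arguments. Unset Strict Implicit. Unset Printing Implicit Defensive.
Import GRing.Theory.
Local Open Scope ring_scope.


Section Ord.
Variable n : nat.
Implicit Types p q r : 'I_n * 'I_n.

Lemma bel_ltE p q : bel_lt p q =
  (val q.1 < val p.1)%N || ((val p.1 == val q.1) && (val p.2 < val q.2)%N).
Proof. by []. Qed.

Lemma bel_lt_trans p q r : bel_lt p q -> bel_lt q r -> bel_lt p r.
Proof. rewrite !bel_ltE; lia. Qed.

Lemma bel_lt_irr p : ~~ bel_lt p p.
Proof. rewrite !bel_ltE; lia. Qed.

Lemma bel_lt_total p q : p != q -> bel_lt p q || bel_lt q p.
Proof.
case: p q => [a b] [c d]; rewrite xpair_eqE !bel_ltE /=.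
rewrite -!(inj_eq val_inj) /=; lia.
Qed.

Lemma rank_le p q : (q == p) || bel_lt q p -> (bel_rank q <= bel_rank p)%N.
Proof.
move=> h; apply: subset_leq_card; apply/subsetP => r; rewrite !inE => /andP[pr lt].
rewrite pr /=; case/orP: h => [/eqP <- // | h]; exact: bel_lt_trans h.
Qed.

Lemma rank_lt p q : bel_lt q p -> is_pos q -> (bel_rank q < bel_rank p)%N.
Proof.
move=> qp pq; rewrite /bel_rank [X in (_ < X)%N](cardsD1 q) inE pq qp add1n ltnS.
apply: subset_leq_card; apply/subsetP => r; rewrite !inE => /andP[pr lt].
rewrite pr (bel_lt_trans lt qp) !andbT; apply/negP => /eqP e; move: (bel_lt_irr q).
by rewrite -{1}e lt.
Qed.

Lemma rank_lt_inv p q : is_pos p -> is_pos q -> (bel_rank q < bel_rank p)%N -> bel_lt q p.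
Proof.
move=> pp pq lt; have : q != p by apply: contraTneq lt => ->; rewrite ltnn.
case/bel_lt_total/orP => // h; have := rank_lt h pp; lia.
Qed.

Lemma rank_bound p : is_pos p -> (bel_rank p < num_pos n)%N.
Proof.
move=> pp; rewrite /num_pos [X in (_ < X)%N](cardsD1 p) inE pp add1n ltnS.
apply: subset_leq_card; apply/subsetP => r; rewrite !inE => /andP[pr lt].
rewrite pr !andbT; apply/negP => /eqP e; move: (bel_lt_irr p); by rewrite -{1}e lt.
Qed.

Lemma rank_surj k : (k < num_pos n)%N -> exists p, is_pos p /\ bel_rank p = k.
Proof.
move=> kN.
set P := [set q : 'I_n * 'I_n | is_pos q].
set s := [seq bel_rank q | q <- enum P].
have us : uniq s.
  rewrite map_inj_in_uniq ?enum_uniq // => p q; rewrite !mem_enum !inE => pp pq e.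
  apply/eqP; apply: contraT => /bel_lt_total/orP[] h.
    by have := rank_lt h pp; rewrite e ltnn.
  by have := rank_lt h pq; rewrite e ltnn.
have sub : {subset s <= iota 0 (num_pos n)}.
  move=> x /mapP[q]; rewrite mem_enum inE => pq ->.
  by rewrite mem_iota add0n /= rank_bound.
have sz : (size (iota 0 (num_pos n)) <= size s)%N.
  by rewrite size_iota size_map -cardE.
have [_ eq] := uniq_min_size us sub sz.
have : k \in s by rewrite eq mem_iota.
by case/mapP => q; rewrite mem_enum inE => pq ->; exists q.
Qed.
End Ord.

Section Mx.
Variables (F : fieldType) (n : nat).
Implicit Types (g h X Y : 'M[F]_n).

Lemma mulE (X Y : 'M[F]_n) a b : (X *m Y) a b = \sum_x X a x * Y x b.
Proof. by rewrite mxE. Qed.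

Lemma ut_mul g h : upper_tri g -> upper_tri h -> upper_tri (g *m h).
Proof.
move=> ug uh a b ba; rewrite mxE big1 // => x _.
case: (ltnP x a) => xa; first by rewrite ug // mul0r.
by rewrite uh ?mulr0 //; apply: leq_trans ba xa.
Qed.

Lemma nn_mull g X : upper_tri g -> in_Nn X -> in_Nn (g *m X).
Proof.
move=> ug uX a b ba; rewrite mxE big1 // => x _.
case: (ltnP x a) => xa; first by rewrite ug // mul0r.
by rewrite uX ?mulr0 //; apply: leq_trans ba xa.
Qed.

Lemma nn_mulr g X : upper_tri g -> in_Nn X -> in_Nn (X *m g).
Proof.
move=> ug uX a b ba; rewrite mxE big1 // => x _.
case: (ltnP a x) => xa; last by rewrite uX ?mul0r.
by rewrite ug ?mulr0 //; apply: leq_ltn_trans ba xa.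
Qed.

Lemma Bn_diag g b : in_Bn g -> g b b != 0.
Proof.
case=> ug Ug.
have : \det g^T != 0 by rewrite det_tr -unitfE -unitmxE.
rewrite det_trig; last by apply/is_trig_mxP => i j ij; rewrite mxE ug.
rewrite (bigD1 b) //= mulf_eq0 negb_or mxE => /andP[] //.
Qed.

Lemma ut_inv g : in_Bn g -> upper_tri (invmx g).
Proof.
move=> Bg; have [ug Ug] := Bg.
have E := mulVmx Ug.
suff H : forall m (a b : 'I_n), nat_of_ord b = m -> (b < a)%N -> invmx g a b = 0.
  by move=> a b; apply: H.
elim/ltn_ind => m IH a b bm ba.
have := congr1 (fun M : 'M[F]_n => M a b) E; rewrite /= mxE (bigD1 b) //=.
rewrite big1 ?addr0; last first.
  move=> x xb; case: (ltnP x b) => xb'.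
    by rewrite (IH x) ?mul0r // -?bm //; apply: ltn_trans ba.
  rewrite ug ?mulr0 //; rewrite ltn_neqAle xb' andbT; apply: contra xb => /eqP.
  by move=> h; apply/eqP/val_inj.
rewrite mxE (_ : (a == b) = false); last by apply/negbTE; rewrite neq_ltn ba orbT.
move/eqP; rewrite mulf_eq0 (negbTE (Bn_diag b Bg)) orbF => /eqP //.
Qed.


Lemma inv_uniq (X Y : 'M[F]_n) : X *m Y = 1%:M -> invmx X = Y.
Proof.
move=> XY; have [UX _] := mulmx1_unit XY.
by rewrite -[invmx X]mulmx1 -XY mulmxA mulVmx // mul1mx.
Qed.

Lemma Bn1 : in_Bn (1%:M : 'M[F]_n).
Proof.
split; last exact: unitmx1.
by move=> a b ba; rewrite mxE (_ : (a == b) = false) //; apply/negbTE; rewrite neq_ltn ba orbT.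
Qed.

Lemma Bn_mul g h : in_Bn g -> in_Bn h -> in_Bn (g *m h).
Proof. by case=> ug Ug [uh Uh]; split; [apply: ut_mul | rewrite unitmx_mul Ug Uh]. Qed.

Lemma Bn_inv g : in_Bn g -> in_Bn (invmx g).
Proof. by move=> Bg; split; [apply: ut_inv | rewrite unitmx_inv; case: Bg]. Qed.

Lemma invM g h : g \in unitmx -> h \in unitmx -> invmx (g *m h) = invmx h *m invmx g.
Proof.
move=> Ug Uh; apply: inv_uniq.
by rewrite -mulmxA (mulmxA h) mulmxV // mul1mx mulmxV.
Qed.

Lemma conjM g h X : in_Bn g -> in_Bn h -> conjm (g *m h) X = conjm g (conjm h X).
Proof.
by case=> _ Ug [_ Uh]; rewrite /conjm invM // !mulmxA.
Qed.

Lemma conj1 X : conjm 1%:M X = X.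
Proof. by rewrite /conjm invmx1 mulmx1 mul1mx. Qed.

Lemma conj_Nn g X : in_Bn g -> in_Nn X -> in_Nn (conjm g X).
Proof.
move=> Bg NX; rewrite /conjm; apply: nn_mulr; first exact: ut_inv.
by apply: nn_mull => //; case: Bg.
Qed.

End Mx.

Section Agree.
Variables (F : fieldType) (n : nat).
Implicit Types (g h X Y : 'M[F]_n).

Lemma agree_conj g X Y k : in_Bn g -> in_Nn X -> in_Nn Y -> agree_upto k X Y ->
  agree_upto k (conjm g X) (conjm g Y).
Proof.
move=> Bg NX NY XY [a b] /= pab rk.
rewrite /conjm !mxE; apply: eq_bigr => y _; rewrite !mxE.
case: (ltnP b y) => yb; first by rewrite (ut_inv Bg) ?mulr0.
congr (_ * _); apply: eq_bigr => x _.
case: (ltnP x a) => xa; first by rewrite (proj1 Bg a x) ?mul0r.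
case: (leqP y x) => xy; first by rewrite NX // NY.
congr (_ * _); apply: (XY (x, y)) => //=.
apply: leq_ltn_trans rk; apply: rank_le.
rewrite bel_ltE xpair_eqE -!(inj_eq val_inj) /=; lia.
Qed.

Lemma agree_trans k X Y Z : agree_upto k X Y -> agree_upto k Y Z -> agree_upto k X Z.
Proof. by move=> h1 h2 p pp rk; rewrite h1 // h2. Qed.

Lemma agree_sym k X Y : agree_upto k X Y -> agree_upto k Y X.
Proof. by move=> h p pp rk; rewrite h. Qed.

Lemma agree_mono k m X Y : (m <= k)%N -> agree_upto k X Y -> agree_upto m X Y.
Proof. by move=> mk h p pp rk; apply: h => //; apply: leq_trans mk. Qed.

End Agree.

Section Run.
Variables (F : fieldType) (n : nat) (As : nat -> 'M[F]_n).
Hypothesis hstep : forall k p, (k < num_pos n)%N -> is_pos p -> bel_rank p = k ->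
  bel_step As k p.
Hypothesis hA0 : in_Nn (As 0).

Lemma belG_Bn m g : belG As m g -> in_Bn g.
Proof. by elim: m => //= m IH [/IH]. Qed.

Lemma belG_agree m g : belG As m g -> agree_upto m (conjm g (As m)) (As m).
Proof. by case: m => [|m] /= => [_ p _|[]] //; rewrite ltn0. Qed.

Lemma belG1 m : belG As m 1%:M.
Proof.
elim: m => [|m IH] /=; first exact: Bn1.
by split => //; rewrite conj1 => p.
Qed.

Lemma step_ok m : (m < num_pos n)%N -> exists h, belG As m h /\ As m.+1 = conjm h (As m).
Proof.
move=> mN; have [p [pp rk]] := rank_surj mN.
have := hstep mN pp rk; rewrite /bel_step /=.
case => [[_ [h [? [? _]]]] | [[_ [h [? [? _]]]] | [_ ->]]]; try by exists h.
by exists 1%:M; split; [exact: belG1 | rewrite conj1].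
Qed.

Lemma Nn_run m : (m <= num_pos n)%N -> in_Nn (As m).
Proof.
elim: m => // m IH mN; have [h [bh ->]] := step_ok mN.
by apply: conj_Nn; [exact: belG_Bn bh | apply: IH; apply: ltnW].
Qed.

Lemma char_belG m : (m <= num_pos n)%N -> forall g, in_Bn g ->
  agree_upto m (conjm g (As m)) (As m) -> belG As m g.
Proof.
elim: m => [|m IH] mN g Bg ag //=; split => //.
have [h [bh e]] := step_ok mN.
have a1 : agree_upto m (As m.+1) (As m) by rewrite e; exact: belG_agree bh.
apply: IH => //; first exact: ltnW.
apply: agree_trans (agree_conj Bg (Nn_run (ltnW mN)) (Nn_run mN) (agree_sym a1)) _.
apply: agree_trans a1; exact: agree_mono ag.
Qed.

Lemma forward m M : (m <= M)%N -> (M <= num_pos n)%N ->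
  agree_upto m (As M) (As m) /\ exists H, in_Bn H /\ As M = conjm H (As m).
Proof.
elim: M => [|M IH] mM MN.
  move: mM; rewrite leqn0 => /eqP ->; split => //; exists 1%:M; split; [exact: Bn1|by rewrite conj1].
move: mM; rewrite leq_eqVlt => /orP[/eqP -> | mM].
  split => //; exists 1%:M; split; [exact: Bn1|by rewrite conj1].
have [a [H [BH eH]]] := IH mM (ltnW MN).
have [h [bh e]] := step_ok MN.
split.
  apply: agree_trans a; apply: (@agree_mono _ _ M m _ _ mM); rewrite e; exact: belG_agree.
exists (h *m H); split; first by apply: Bn_mul => //; exact: belG_Bn bh.
by rewrite e conjM // ?eH //; exact: belG_Bn bh.
Qed.

Lemma run_zero p g0 : is_pos p -> in_Bn g0 ->
  agree_upto (bel_rank p) (conjm g0 (As (num_pos n))) (As (num_pos n)) ->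
  conjm g0 (As (num_pos n)) p.1 p.2 = 0 -> As (num_pos n) p.1 p.2 = 0.
Proof.
move=> pp Bg0 ag z.
set k := bel_rank p; have kN : (k < num_pos n)%N := rank_bound pp.
have [aC [H [BH eC]]] := forward (ltnW kN) (leqnn _).
have Bg : in_Bn (g0 *m H) by apply: Bn_mul.
have cg : conjm (g0 *m H) (As k) = conjm g0 (As (num_pos n)) by rewrite conjM // -eC.
have bg : belG As k (g0 *m H).
  by apply: char_belG => //; [exact: ltnW | rewrite cg; exact: agree_trans aC].
have V0 : exists g, belG As k g /\ conjm g (As k) p.1 p.2 = 0.
  by exists (g0 *m H); rewrite cg.
have := hstep kN pp erefl; rewrite /bel_step /=.
case => [[_ [h [_ [_ z1]]]] | [[hV _] | [[l [l0 hV]] _]]].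
- have [a1 _] := forward kN (leqnn _).
  by rewrite (a1 p pp (ltnSn _)).
- by have := (hV 0).1 V0; rewrite eqxx.
- by have := (hV 0).1 V0 => e; rewrite -e eqxx in l0.
Qed.
End Run.

Section Delta.
Variables (F : fieldType) (n : nat).
Lemma delta_mulE (r s a b : 'I_n) (M : 'M[F]_n) :
  (delta_mx r s *m M) a b = (a == r)%:R * M s b.
Proof.
rewrite mxE (bigD1 s) //= big1 ?addr0; first by rewrite mxE eqxx andbT.
by move=> x xs; rewrite mxE (negbTE xs) andbF mul0r.
Qed.
Lemma mul_deltaE (r s a b : 'I_n) (M : 'M[F]_n) :
  (M *m delta_mx r s) a b = M a r * (b == s)%:R.
Proof.
rewrite mxE (bigD1 r) //= big1 ?addr0; first by rewrite mxE eqxx.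
by move=> x xs; rewrite mxE (negbTE xs) mulr0.
Qed.
End Delta.

Section Concrete.
Variables (F : fieldType) (n : nat) (I : {set 'I_n}) (sigma : 'I_n -> 'I_n).
Hypothesis sigma_inj : {in I &, injective sigma}.
Hypothesis sigma_incr : forall i, i \in I -> (i < sigma i)%N.
Variable U : 'M[F]_n.
Hypothesis uU : upper_tri U.
Hypothesis dU : forall i, U i i = 1.
Local Notation Q := (subperm_mx F I sigma).
Local Notation A := (Q *m U).

Lemma A_entry (a b : 'I_n) : A a b = if a \in I then U (sigma a) b else 0.
Proof.
rewrite mxE; case: (boolP (a \in I)) => aI.
  rewrite (bigD1 (sigma a)) //= big1 ?addr0; first by rewrite mxE aI eqxx mul1r.
  by move=> x xs; rewrite mxE aI /= eq_sym (negbTE xs) mul0r.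
by rewrite big1 // => x _; rewrite mxE (negbTE aI) mul0r.
Qed.

Lemma A_below (a b : 'I_n) : (b < sigma a)%N -> A a b = 0.
Proof. by move=> ba; rewrite A_entry; case: ifP => // _; rewrite uU. Qed.

Lemma A_strict (a b : 'I_n) : (b <= a)%N -> A a b = 0.
Proof.
move=> ba; rewrite A_entry; case: ifP => // aI; rewrite uU //.
by apply: leq_ltn_trans ba (sigma_incr aI).
Qed.

Lemma BnU : in_Bn U.
Proof.
split => //; rewrite unitmxE -det_tr det_trig; last first.
  by apply/is_trig_mxP => a b ab; rewrite mxE uU.
by rewrite big1 ?unitr1 // => a _; rewrite mxE dU.
Qed.

Lemma Q_delta (i j : 'I_n) : i \in I -> Q *m delta_mx (sigma i) j = delta_mx i j :> 'M[F]_n.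
Proof.
move=> iI; apply/matrixP => a b; rewrite mul_deltaE !mxE.
case: (eqVneq a i) => [-> | ai]; first by rewrite iI eqxx /= mul1r.
case: (boolP (a \in I)) => aI /=; last by rewrite mul0r.
case: (eqVneq (sigma a) (sigma i)) => e /=; last by rewrite mul0r.
by move: ai; rewrite (sigma_inj aI iI e) eqxx.
Qed.

Definition good_g (i j : 'I_n) (g0 : 'M[F]_n) :=
  [/\ in_Bn g0, (forall a b, bel_lt (a, b) (i, j) -> conjm g0 A a b = A a b)
    & conjm g0 A i j = 0].

Lemma case1 (i j : 'I_n) : i \in I -> (sigma i < j)%N -> j \notin I -> exists g0, good_g i j g0.
Proof.
move=> iI sj jI.
set c := A i j; set s := sigma i; set V := invmx U.
set X := V *m delta_mx s j.
have BV : in_Bn V by apply: Bn_inv; exact: BnU.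
have Xe : forall a b, X a b = V a s * (b == j)%:R by move=> a b; rewrite mul_deltaE.
have XX : X *m X = 0.
  apply/matrixP => a b; rewrite mxE [RHS]mxE big1 // => y _; rewrite !Xe.
  case: (eqVneq y j) => [-> | yj]; last by rewrite mulr0 mul0r.
  by rewrite (proj1 BV j s sj) mul0r mulr0.
set g0 := 1%:M + c *: X; set g' := 1%:M - c *: X.
have gg : g0 *m g' = 1%:M.
  rewrite /g0 /g' mulmxBr mulmx1 mulmxDl mul1mx -!scalemxAl -!scalemxAr XX.
  by rewrite !scaler0 addr0 addrK.
have Bg : in_Bn g0.
  split; last by case: (mulmx1_unit gg).
  move=> a b ba; rewrite mxE; have -> : (c *: X) a b = c * X a b by rewrite mxE.
  rewrite Xe mxE.
  rewrite (_ : (a == b) = false) ?mulr0n ?add0r; last first.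
    by apply/negbTE; rewrite neq_ltn ba orbT.
  case: (eqVneq b j) => [e | _]; last by rewrite mulr0 mulr0.
  rewrite (proj1 BV a s) ?mul0r ?mulr0 //; apply: ltn_trans sj _; by rewrite -e.
have XA : X *m A = 0.
  rewrite -mulmxA; apply/matrixP => a b; rewrite mxE [RHS]mxE big1 // => y _.
  by rewrite delta_mulE A_entry (negbTE jI) mulr0 mulr0.
have AX : A *m X = delta_mx i j.
  by rewrite /X !mulmxA -(mulmxA Q) mulmxV ?mulmx1 ?Q_delta //; case: BnU.
have cj : conjm g0 A = A - c *: delta_mx i j.
  rewrite /conjm (inv_uniq gg) /g0 /g' mulmxDl mul1mx -scalemxAl XA scaler0 addr0.
  by rewrite mulmxBr mulmx1 -scalemxAr AX.
exists g0; split => //.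
  move=> a b ab; rewrite cj !mxE.
  rewrite (_ : (a == i) && (b == j) = false) ?mulr0 ?subr0 //.
  apply/negbTE; apply: contraNN (bel_lt_irr (i, j)) => /andP[/eqP ai /eqP bj].
  by rewrite ai bj in ab.
rewrite cj; have -> : (A - c *: delta_mx i j) i j = A i j - c * (delta_mx i j : 'M[F]_n) i j by rewrite !mxE.
rewrite (_ : (delta_mx i j : 'M[F]_n) i j = 1); last by rewrite mxE !eqxx.
by rewrite mulr1 subrr.
Qed.

Lemma case2 (i j i' : 'I_n) : i \in I -> i' \in I -> sigma i' = j -> (i < i')%N ->
  exists g0, good_g i j g0.
Proof.
move=> iI i'I sj ii'.
set c := A i j; set D : 'M[F]_n := delta_mx i i'.
have DD : D *m D = 0.
  by rewrite /D mul_delta_mx_0 //; apply/eqP => e; move: ii'; rewrite e ltnn.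
set g0 := 1%:M - c *: D; set g' := 1%:M + c *: D.
have gg : g0 *m g' = 1%:M.
  rewrite /g0 /g' mulmxDr mulmx1 mulmxBl mul1mx -!scalemxAl -!scalemxAr DD.
  by rewrite !scaler0 subr0 subrK.
have Bg : in_Bn g0.
  split; last by case: (mulmx1_unit gg).
  move=> a b ba; rewrite !mxE.
  rewrite (_ : (a == b) = false) ?mulr0n ?add0r; last first.
    by apply/negbTE; rewrite neq_ltn ba orbT.
  case: (eqVneq a i) => [ea | _]; last by rewrite /= mulr0 oppr0.
  case: (eqVneq b i') => [eb | _]; last by rewrite /= mulr0 oppr0.
  by move: ba ii'; rewrite ea eb => h1 h2; have := ltn_trans h1 h2; rewrite ltnn.
set M := A - c *: (D *m A).
have cj : conjm g0 A = M + c *: (M *m D).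
  by rewrite /conjm (inv_uniq gg) /g0 /g' mulmxBl mul1mx -scalemxAl mulmxDr mulmx1
    -scalemxAr.
have Me : forall a b, M a b = A a b - c * ((a == i)%:R * A i' b).
  by move=> a b; rewrite -delta_mulE /M /D !mxE.
have Mi : forall a : 'I_n, (i <= a)%N -> M a i = 0.
  move=> a ia; rewrite Me A_strict // (A_strict (ltnW ii')) !mulr0 subr0 //.
have ce : forall a b : 'I_n, (i <= a)%N -> conjm g0 A a b = M a b.
  move=> a b ia; rewrite cj.
  have -> : (M + c *: (M *m D)) a b = M a b + c * (M *m D) a b by rewrite !mxE.
  by rewrite /D mul_deltaE Mi // mul0r mulr0 addr0.
exists g0; split => //.
  move=> a b; rewrite bel_ltE /= => ab.
  have ia : (i <= a)%N by case/orP: ab => [/ltnW // | /andP[/eqP -> _]].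
  rewrite ce // Me; case: (eqVneq a i) => [ea | ai]; last by rewrite mul0r mulr0 subr0.
  rewrite (@A_below i' b) ?mulr0 ?subr0 // sj.
  by move: ab; rewrite ea ltnn /= => /andP[_].
by rewrite ce // Me eqxx mul1r (A_entry i' j) i'I sj dU mulr1 subrr.
Qed.
End Concrete.

Section Chain.
Variables (n : nat) (I : {set 'I_n}) (sigma : 'I_n -> 'I_n).
Hypothesis sigma_inj : {in I &, injective sigma}.
Hypothesis sigma_incr : forall i, i \in I -> (i < sigma i)%N.

Fixpoint reach (k : nat) (x y : 'I_n) : Prop :=
  match k with 0 => x = y | k'.+1 => x \in I /\ reach k' (sigma x) y end.

Lemma reach_le k x y : reach k x y -> (x <= y)%N.
Proof.
elim: k x => [|k IH] x /=; first by move=> ->.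
by case=> xI /IH h; apply: leq_trans (ltnW (sigma_incr xI)) h.
Qed.

Lemma reach_lt k x y : reach k.+1 x y -> (x < y)%N.
Proof. by case=> xI /reach_le h; apply: leq_trans (sigma_incr xI) h. Qed.

Lemma reach_snoc k x y : reach k x y -> y \in I -> reach k.+1 x (sigma y).
Proof.
elim: k x => [|k IH] x /=; first by move=> -> yI.
by case=> xI h yI; split => //; apply: IH.
Qed.

Lemma reach_last k x y : reach k.+1 x y -> exists z, [/\ reach k x z, z \in I & sigma z = y].
Proof.
elim: k x => [|k IH] x /=; first by case=> xI e; exists x.
case=> xI /IH [z [h zI e]]; by exists z.
Qed.

Lemma chain_reach i j : same_chain I sigma i j -> exists k, reach k i j \/ reach k j i.
Proof.
move/connectP => [p pth ->].
suff : forall x, (exists k, reach k i x \/ reach k x i) ->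
  path (fun a b => Qarc I sigma a b || Qarc I sigma b a) x p ->
  exists k, reach k i (last x p) \/ reach k (last x p) i.
  by move=> H; apply: H pth; exists 0; left.
clear pth; elim: p => [|y p IH] x Rx //= /andP[exy pth]; apply: IH pth.
have [k [h|h]] := Rx; case/orP: exy => /andP[xI /eqP e].
- by exists k.+1; left; rewrite -e; apply: reach_snoc.
- case: k h => [|k] h.
    by exists 1; right; rewrite /= xI e h.
  have [z [hz zI ez]] := reach_last h.
  have zy : z = y by apply: sigma_inj => //; rewrite ez e.
  by exists k; left; rewrite -zy.
- case: k h => [|k] h.
    by exists 1; left; rewrite /= -h xI e.
  by case: h => _ h; exists k; right; rewrite -e.
- by exists k.+1; right; split => //; rewrite e.
Qed.
End Chain.


Unset Implicit Arguments.
Theorem theorem4p6 (F : fieldType) (n : nat) (I : {set 'I_n}) (sigma : 'I_n -> 'I_n)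
  (sigma_inj : {in I &, injective sigma})
  (sigma_incr : forall i, i \in I -> (i < sigma i)%N)
  (A : 'M[F]_n)
  (hA : in_QUn (subperm_mx F I sigma) A)
  (hcf : is_bel_cf A) :
  forall i j : 'I_n, i \in I ->
    (* (1) i^+ < j and j in S_h *)
    ((sigma i < j)%N -> j \notin I -> A i j = 0) /\
    (* (2) j notin S_t (j = sigma i' for some i' in I) and i < j^- *)
    ((exists i', [/\ i' \in I, sigma i' = j & (i < i')%N]) -> A i j = 0) /\
    (* in particular: same chain and j <> i^+ *)
    (same_chain I sigma i j -> j != sigma i -> A i j = 0).
Proof.
move=> i j iI.
have [A0 [N0 hb0]] := hcf; have [As [e0 [hs eN]]] := hb0.
have [U [[uU dU] eA]] := hA.
rewrite eA in eN *.
have hA0 : in_Nn (As 0%N) by rewrite e0.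
have key : forall a b : 'I_n, (a < b)%N -> (exists g0, good_g I sigma U a b g0) ->
    (subperm_mx F I sigma *m U) a b = 0.
  move=> a b ab [g0 [Bg hb z]].
  have := @run_zero _ _ _ hs hA0 (a, b) g0 ab Bg.
  rewrite eN /=; apply => //.
  move=> q pq rq; have := @rank_lt_inv _ (a, b) q ab pq rq; case: q pq rq => q1 q2 pq rq lt.
  exact: hb.
have c2 : (exists i', [/\ i' \in I, sigma i' = j & (i < i')%N]) ->
    (subperm_mx F I sigma *m U) i j = 0.
  case=> i' [i'I sj ii']; apply: key; last by apply: case2 ii'.
  by have := sigma_incr i' i'I; rewrite sj; lia.
split; [|split] => //.
  move=> sj jI; apply: key; last by apply: case1.
  by have := sigma_incr i iI; lia.
move=> sc jne; have [k [h|h]] := chain_reach sigma_inj sc.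
  case: k h => [|[|k]] h.
  - by rewrite (@A_strict _ _ _ _ sigma_incr _ uU) // h.
  - by case: h => _ /= e; rewrite e eqxx in jne.
  - have [z [hz zI ez]] := reach_last h.
    apply: c2; exists z; split => //; have H := reach_lt sigma_incr; exact: (H k).
rewrite (@A_strict _ _ _ _ sigma_incr _ uU) //; have H := reach_le sigma_incr; exact: (H k).
Qed.
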